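(* Let $a,b$ be distinct real numbers, let $x_0\in\mathbb{R}$, and set $\lambda_n:=\frac{2n+3}{n+2}$ for all $n\in\mathbb{N}$ (so $\lambda_n\to2$ and $\sum_n(2-\lambda_n)=+\infty$). Define $(x_n)_{n\in\mathbb{N}}$ by \[ x_{2n+1}:=(1-\lambda_{2n})x_{2n}+\lambda_{2n}a,\qquad x_{2n+2}:=(1-\lambda_{2n+1})x_{2n+1}+\lambda_{2n+1}b . \] Then $x_{2n}\to \operatorname{sign}(b-a)\,\infty$ and $x_{2n+1}\to\operatorname{sign}(a-b)\,\infty$. *)

(* Defs.v *)
From Stdlib Require Import Reals.
From Coquelicot Require Import Coquelicot.
Open Scope R_scope.

Definition lam (n : nat) : R := (2 * INR n + 3) / (INR n + 2).

Fixpoint xseq (a b x0 : R) (n : nat) : R :=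
  match n with
  | O => x0
  | S m => (1 - lam m) * xseq a b x0 m
           + lam m * (if Nat.even m then a else b)
  end.

(* Main.v *)
Require Import Defs.
From Stdlib Require Import Reals Lra Lia.
From Coquelicot Require Import Coquelicot.
Open Scope R_scope.

Lemma xseq_S a b x0 n : xseq a b x0 (S n) =
  (1 - lam n) * xseq a b x0 n + lam n * (if Nat.even n then a else b).
Proof. reflexivity. Qed.

Lemma even2 k : Nat.even (2 * k) = true.
Proof. rewrite Nat.even_mul; reflexivity. Qed.

Lemma odd2 k : Nat.even (S (2 * k)) = false.
Proof. rewrite Nat.even_succ, Nat.odd_mul; reflexivity. Qed.

Definition S2 a b x0 (k : nat) : R :=
  x0 + (b - a) * (2 * INR k * INR k + INR k) + 2 * b * INR k.

Lemma closed a b x0 k :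
  (2 * INR k + 1) * xseq a b x0 (2 * k) = S2 a b x0 k /\
  (2 * INR k + 2) * xseq a b x0 (2 * k + 1) = (4 * INR k + 3) * a - S2 a b x0 k.
Proof.
  assert (odd : forall k, (2 * INR k + 1) * xseq a b x0 (2 * k) = S2 a b x0 k ->
    (2 * INR k + 2) * xseq a b x0 (2 * k + 1) = (4 * INR k + 3) * a - S2 a b x0 k).
  { intros j Hj. replace (2 * j + 1)%nat with (S (2 * j)) by lia.
    rewrite xseq_S, even2. unfold lam. replace (INR (2*j)) with (2*INR j) by (rewrite mult_INR; simpl; ring).
    pose proof (pos_INR j).
    replace ((2 * INR j + 2) * ((1 - (2 * (2 * INR j) + 3) / (2 * INR j + 2)) * xseq a b x0 (2 * j) +
      (2 * (2 * INR j) + 3) / (2 * INR j + 2) * a))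
    with (- ((2 * INR j + 1) * xseq a b x0 (2 * j)) + (4 * INR j + 3) * a) by (field; lra).
    rewrite Hj. ring. }
  induction k as [|k IH].
  - assert (H0 : (2 * INR 0 + 1) * xseq a b x0 (2 * 0) = S2 a b x0 0).
    { unfold S2; simpl; ring. }
    split; [exact H0 | exact (odd 0%nat H0)].
  - destruct IH as [_ IH2].
    assert (H : (2 * INR (S k) + 1) * xseq a b x0 (2 * S k) = S2 a b x0 (S k)).
    { replace (2 * S k)%nat with (S (2 * k + 1)) by lia.
      rewrite xseq_S.
      replace (Nat.even (2 * k + 1)) with false
        by (replace (2 * k + 1)%nat with (S (2 * k)) by lia; now rewrite odd2).
      unfold lam, S2. replace (INR (2*k+1)) with (2*INR k + 1) by (rewrite plus_INR, mult_INR; simpl; ring).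
      rewrite S_INR.
      pose proof (pos_INR k).
      replace ((2 * (INR k + 1) + 1) *
        ((1 - (2 * (2 * INR k + 1) + 3) / (2 * INR k + 1 + 2)) * xseq a b x0 (2 * k + 1) +
         (2 * (2 * INR k + 1) + 3) / (2 * INR k + 1 + 2) * b))
      with (- ((2 * INR k + 2) * xseq a b x0 (2 * k + 1)) + (4 * INR k + 5) * b)
        by (field; lra).
      rewrite IH2. unfold S2. ring. }
    split; [exact H | exact (odd _ H)].
Qed.

Lemma quad_lim (al be ga e f : R) (u : nat -> R) :
  0 < al -> 0 < be -> 0 < ga ->
  (forall k, (al * INR k + be) * u k = ga * INR k * INR k + e * INR k + f) ->
  is_lim_seq u p_infty.
Proof.
  intros Hal Hbe Hga Hu.
  set (C := (Rabs (ga * be / al) + Rabs e) / al + Rabs f / be).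
  apply is_lim_seq_le_p_loc with (u := fun k => ga / al * INR k - C).
  - exists 0%nat. intros k _.
    pose proof (pos_INR k) as Hk.
    assert (HC1 : C * al >= ga * be / al - e).
    { unfold C. rewrite Rmult_plus_distr_r.
      replace ((Rabs (ga * be / al) + Rabs e) / al * al) with (Rabs (ga * be / al) + Rabs e)
        by (field; lra).
      pose proof (Rle_abs (ga*be/al)). pose proof (Rabs_pos f).
      pose proof (Rle_abs (-e)). rewrite Rabs_Ropp in *.
      assert (0 <= Rabs f / be * al).
      { apply Rmult_le_pos; [apply Rdiv_le_0_compat|]; lra. } lra. }
    assert (HC2 : C * be >= - f).
    { unfold C. rewrite Rmult_plus_distr_r.
      replace (Rabs f / be * be) with (Rabs f) by (field; lra).
      pose proof (Rle_abs (-f)). rewrite Rabs_Ropp in *.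
      assert (0 <= (Rabs (ga * be / al) + Rabs e) / al * be).
      { apply Rmult_le_pos; [apply Rdiv_le_0_compat|]; try lra.
        pose proof (Rabs_pos (ga*be/al)); pose proof (Rabs_pos e); lra. } lra. }
    assert (Hpos : 0 < al * INR k + be) by nra.
    apply Rmult_le_reg_l with (al * INR k + be); [exact Hpos|].
    rewrite Hu.
    replace ((al * INR k + be) * (ga / al * INR k - C))
      with (ga * INR k * INR k + (ga * be / al - C * al) * INR k - C * be)
      by (field; lra).
    nra.
  - assert (HM : Rbar_mult (ga/al) p_infty = p_infty).
    { simpl. destruct (Rle_dec 0 (ga/al)) as [H|H].
        + destruct (Rle_lt_or_eq_dec 0 (ga/al) H) as [H'|H'].
          * reflexivity.
          * exfalso. assert (0 < ga/al) by (apply Rdiv_lt_0_compat; lra). lra.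
        + exfalso. assert (0 < ga/al) by (apply Rdiv_lt_0_compat; lra). lra. }
    apply (is_lim_seq_plus _ _ p_infty (-C)).
    + rewrite <- HM. apply is_lim_seq_scal_l. apply is_lim_seq_INR.
    + apply is_lim_seq_const.
    + reflexivity.
Qed.

Theorem mainTheorem5 (a b x0 : R) (hab : a <> b) :
  (a < b ->
     is_lim_seq (fun n => xseq a b x0 (2 * n)) p_infty /\
     is_lim_seq (fun n => xseq a b x0 (2 * n + 1)) m_infty) /\
  (b < a ->
     is_lim_seq (fun n => xseq a b x0 (2 * n)) m_infty /\
     is_lim_seq (fun n => xseq a b x0 (2 * n + 1)) p_infty).
Proof.
  split; intros H; split.
  - apply (quad_lim 2 1 (2*(b-a)) (b - a + 2*b) x0); try lra.
    intros k; destruct (closed a b x0 k) as [H1 _]; rewrite H1; unfold S2; ring.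
  - replace m_infty with (Rbar_opp p_infty) by reflexivity.
    apply is_lim_seq_opp.
    apply (quad_lim 2 2 (2*(b-a)) (b - a + 2*b - 4*a) (x0 - 3*a)); try lra.
    intros k; destruct (closed a b x0 k) as [_ H2].
    replace ((2 * INR k + 2) * - xseq a b x0 (2 * k + 1))
      with (- ((2 * INR k + 2) * xseq a b x0 (2 * k + 1))) by ring.
    rewrite H2; unfold S2; ring.
  - replace m_infty with (Rbar_opp p_infty) by reflexivity.
    apply is_lim_seq_opp.
    apply (quad_lim 2 1 (2*(a-b)) (a - b - 2*b) (- x0)); try lra.
    intros k; destruct (closed a b x0 k) as [H1 _].
    replace ((2 * INR k + 1) * - xseq a b x0 (2 * k))
      with (- ((2 * INR k + 1) * xseq a b x0 (2 * k))) by ring.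
    rewrite H1; unfold S2; ring.
  - apply (quad_lim 2 2 (2*(a-b)) (a - b + 4*a - 2*b) (3*a - x0)); try lra.
    intros k; destruct (closed a b x0 k) as [_ H2]; rewrite H2; unfold S2; ring.
Qed.
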